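(* Let $\xi>0$ be real, let $b\ge0$ and $N\ge2$ be integers, and for integers $0\le d\le N-1$ and $0\le l\le 2d$ put \begin{equation*} f_{d,l} = \exp\left(\frac{(2b+1)(d^2+d)\xi}{2N}\right) \cdot 2\sinh\left(\frac{(2d+1)\xi}{2N}\right) \cdot \prod_{k=1}^{l}4 \sinh\left(\frac{(2d+1+k)\xi}{2N}\right) \sinh\left(\frac{(2d+1-k)\xi}{2N}\right). \end{equation*} Then for all integers $l,d$ with $1\le d\le N-1$ and $0\le l\le2d-2$ we have $f_{d,l}> f_{d-1,l}$. *)

(* Defs.v *)
From Stdlib Require Import Reals.
Open Scope R_scope.

Fixpoint prod_1_to (l : nat) (g : nat -> R) : R :=
  match l with
  | O => 1
  | S l' => prod_1_to l' g * g l
  end.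

Definition fdl (xi : R) (b N d l : nat) : R :=
  exp ((2 * INR b + 1) * (INR d ^ 2 + INR d) * xi / (2 * INR N))
  * (2 * sinh ((2 * INR d + 1) * xi / (2 * INR N)))
  * prod_1_to l (fun k =>
      4 * sinh ((2 * INR d + 1 + INR k) * xi / (2 * INR N))
        * sinh ((2 * INR d + 1 - INR k) * xi / (2 * INR N))).

(* Main.v *)
Require Import Defs.
From Stdlib Require Import Reals Lra Lia.
Open Scope R_scope.

Lemma sinh_pos x : 0 < x -> 0 < sinh x.
Proof. intro H. rewrite <- sinh_0. now apply sinh_lt. Qed.

Lemma prod_le (h g : nat -> R) l :
  (forall k, (1 <= k <= l)%nat -> 0 < h k <= g k) ->
  0 < prod_1_to l h <= prod_1_to l g.
Proof.
  induction l as [|l IH]; intros H; simpl.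
  - lra.
  - destruct IH as [I1 I2]. { intros k Hk. apply H. lia. }
    destruct (H (S l)) as [J1 J2]. lia.
    split. apply Rmult_lt_0_compat; lra.
    apply Rmult_le_compat; lra.
Qed.

Theorem lemma3p1 (xi : R) (b N : nat) (hxi : 0 < xi) (hN : (2 <= N)%nat)
  (d l : nat) (hd1 : (1 <= d)%nat) (hd2 : (d <= N - 1)%nat)
  (hl : (l <= 2 * d - 2)%nat) :
  fdl xi b N d l > fdl xi b N (d - 1) l.
Proof.
  unfold fdl.
  assert (HN : 0 < INR N) by (apply lt_0_INR; lia).
  set (c := xi / (2 * INR N)).
  assert (Hc : 0 < c) by (unfold c; apply Rdiv_lt_0_compat; lra).
  assert (E : forall a, a * xi / (2 * INR N) = a * c) by (intro; unfold c, Rdiv; ring).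
  rewrite !E.
  rewrite (minus_INR d 1) by lia. simpl (INR 1).
  assert (Hd : 1 <= INR d) by (apply (le_INR 1); lia).
  assert (Hb : 0 <= INR b) by apply pos_INR.
  assert (Hl : INR l <= 2 * INR d - 2).
  { replace (2 * INR d - 2) with (INR (2 * d - 2)).
    apply le_INR; lia. rewrite minus_INR by lia. rewrite mult_INR. simpl. ring. }
  destruct (prod_le
    (fun k => 4 * sinh ((2 * (INR d - 1) + 1 + INR k) * xi / (2 * INR N)) * sinh ((2 * (INR d - 1) + 1 - INR k) * xi / (2 * INR N)))
    (fun k => 4 * sinh ((2 * INR d + 1 + INR k) * xi / (2 * INR N)) * sinh ((2 * INR d + 1 - INR k) * xi / (2 * INR N))) l) as [P1 P2].
  { intros k Hk. rewrite !E.
    assert (Hk1 : 1 <= INR k) by (apply (le_INR 1); lia).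
    assert (Hk2 : INR k <= INR l) by (apply le_INR; lia).
    assert (A1 : 0 < sinh ((2 * (INR d - 1) + 1 + INR k) * c)) by (apply sinh_pos; nra).
    assert (A2 : 0 < sinh ((2 * (INR d - 1) + 1 - INR k) * c)) by (apply sinh_pos; nra).
    assert (B1 : sinh ((2 * (INR d - 1) + 1 + INR k) * c) < sinh ((2 * INR d + 1 + INR k) * c)) by (apply sinh_lt; nra).
    assert (B2 : sinh ((2 * (INR d - 1) + 1 - INR k) * c) < sinh ((2 * INR d + 1 - INR k) * c)) by (apply sinh_lt; nra).
    split. nra. nra. }
  assert (S1 : 0 < sinh ((2 * (INR d - 1) + 1) * c)) by (apply sinh_pos; nra).
  assert (S2 : sinh ((2 * (INR d - 1) + 1) * c) < sinh ((2 * INR d + 1) * c)) by (apply sinh_lt; nra).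
  set (e1 := exp ((2 * INR b + 1) * ((INR d - 1) ^ 2 + (INR d - 1)) * c)).
  set (e2 := exp ((2 * INR b + 1) * (INR d ^ 2 + INR d) * c)).
  assert (X0 : 0 < e1) by apply exp_pos.
  assert (X1 : e1 < e2) by (apply exp_increasing;
    assert (0 < (2 * INR b + 1) * (2 * INR d) * c) by (apply Rmult_lt_0_compat; [apply Rmult_lt_0_compat|]; lra);
    nra).
  revert P1 P2. generalize (prod_1_to l (fun k => 4 * sinh ((2 * (INR d - 1) + 1 + INR k) * xi / (2 * INR N)) * sinh ((2 * (INR d - 1) + 1 - INR k) * xi / (2 * INR N)))) as p1.
  generalize (prod_1_to l (fun k => 4 * sinh ((2 * INR d + 1 + INR k) * xi / (2 * INR N)) * sinh ((2 * INR d + 1 - INR k) * xi / (2 * INR N)))) as p2.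
  intros p2 p1 P1 P2.
  set (s1 := sinh ((2 * (INR d - 1) + 1) * c)) in *.
  set (s2 := sinh ((2 * INR d + 1) * c)) in *.
  apply Rlt_gt.
  assert (Q : e1 * (2 * s1) < e2 * (2 * s2)) by (apply Rmult_le_0_lt_compat; lra).
  assert (Q0 : 0 < e1 * (2 * s1)) by nra.
  nra.
Qed.
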